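(* Let $\mathfrak K=(K,\bigsqcup,\odot,{}^*,{\sim},e)$ be an involutive generalized dynamic algebra, and define $\bullet\colon K\times\widetilde K\to\widetilde K$ by $k\bullet v={\sim}{\sim}(k\odot v)$. Then ${\sim}{\sim}{\sim}v={\sim}v$ for every $v\in K$, and $(\widetilde K,\bigvee,\bullet)$ is a left unital $K$-module (with $(\widetilde K,\preceq)$ a complete lattice whose joins are given by $\bigvee$), with least element ${\sim}{\sim}0$ and greatest element ${\sim}{\sim}1$.
   Context: An involutive unital quantale is $(Q,\bigsqcup,\odot,{}^*,e)$: $Q$ a complete join-semilattice (order $\sqsubseteq$, $0=\bigsqcup\emptyset$, $1=\bigsqcup Q$), $\odot$ associative and distributing over arbitrary joins in each argument, $e$ a two-sided unit, ${}^*$ with $x^{**}=x$, $(x\odot y)^*=y^*\odot x^*$, $(\bigsqcup_i x_i)^*=\bigsqcup_i x_i^*$. An involutive generalized dynamic algebra is $\mathfrak K=(K,\bigsqcup,\odot,{}^*,{\sim},e)$ with $(K,\bigsqcup,\odot,{}^*,e)$ an involutive unital quantale and ${\sim}\colon K\to K$ such that for all $x,y\in K$ and families $(x_i)_{i\in I}$: ${\sim}(x\odot{\sim}{\sim}y)={\sim}(x\odot y)$; ${\sim}(\bigsqcup_i{\sim}{\sim}x_i)={\sim}(\bigsqcup_i x_i)$; $({\sim}x)^*={\sim}x$; ${\sim}{\sim}({\sim}{\sim}x\odot y)={\sim}({\sim}x\sqcup{\sim}({\sim}x\sqcup y))$. Test set $\widetilde K=\{{\sim}k\mid k\in K\}$;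 for $W\subseteq\widetilde K$, $\bigvee W={\sim}{\sim}(\bigsqcup W)$; $k\preceq l$ iff $\bigvee\{k,l\}=l$. For a unital quantale $(Q,\bigsqcup,\odot,e)$, a left unital $Q$-module is a complete join-semilattice $(A,\bigvee)$ with a map $\bullet\colon Q\times A\to A$ such that $v\bullet\bigvee S=\bigvee_{s\in S}v\bullet s$, $(\bigsqcup T)\bullet a=\bigvee_{t\in T}t\bullet a$, $u\bullet(v\bullet a)=(u\odot v)\bullet a$, and $e\bullet a=a$. *)

(* Defs.v *)
Section Defs.
Variable K : Type.

Definition fam_join (sup : (K -> Prop) -> K) (I : Type) (x : I -> K) : K :=
  sup (fun y => exists i, y = x i).

Definition is_complete_join_semilattice (le : K -> K -> Prop) (sup : (K -> Prop) -> K) : Prop :=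
  (forall x, le x x) /\
  (forall x y, le x y -> le y x -> x = y) /\
  (forall x y z, le x y -> le y z -> le x z) /\
  (forall S : K -> Prop, forall x, S x -> le x (sup S)) /\
  (forall S : K -> Prop, forall u, (forall x, S x -> le x u) -> le (sup S) u).

Definition is_inv_unital_quantale (le : K -> K -> Prop) (sup : (K -> Prop) -> K)
    (mul : K -> K -> K) (star : K -> K) (e : K) : Prop :=
  is_complete_join_semilattice le sup /\
  (forall x y z, mul x (mul y z) = mul (mul x y) z) /\
  (forall x (I : Type) (y : I -> K),
      mul x (fam_join sup I y) = fam_join sup I (fun i => mul x (y i))) /\
  (forall (I : Type) (x : I -> K) y,
      mul (fam_join sup I x) y = fam_join sup I (fun i => mul (x i) y)) /\
  (forall x, mul e x = x) /\ (forall x, mul x e = x) /\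
  (forall x, star (star x) = x) /\
  (forall x y, star (mul x y) = mul (star y) (star x)) /\
  (forall (I : Type) (x : I -> K),
      star (fam_join sup I x) = fam_join sup I (fun i => star (x i))).

Definition join2 (sup : (K -> Prop) -> K) (x y : K) : K :=
  sup (fun z => z = x \/ z = y).

Definition is_IGDA (le : K -> K -> Prop) (sup : (K -> Prop) -> K)
    (mul : K -> K -> K) (star : K -> K) (neg : K -> K) (e : K) : Prop :=
  is_inv_unital_quantale le sup mul star e /\
  (forall x y, neg (mul x (neg (neg y))) = neg (mul x y)) /\
  (forall (I : Type) (x : I -> K),
      neg (fam_join sup I (fun i => neg (neg (x i)))) = neg (fam_join sup I x)) /\
  (forall x, star (neg x) = neg x) /\
  (forall x y, neg (neg (mul (neg (neg x)) y))
               = neg (join2 sup (neg x) (neg (join2 sup (neg x) y)))).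

Definition tests (neg : K -> K) (v : K) : Prop := exists k, v = neg k.

Definition tjoin (sup : (K -> Prop) -> K) (neg : K -> K) (W : K -> Prop) : K :=
  neg (neg (sup W)).

Definition tle (sup : (K -> Prop) -> K) (neg : K -> K) (k l : K) : Prop :=
  tjoin sup neg (fun z => z = k \/ z = l) = l.

Definition tact (mul : K -> K -> K) (neg : K -> K) (k v : K) : K :=
  neg (neg (mul k v)).

Definition bot (sup : (K -> Prop) -> K) : K := sup (fun _ => False).
Definition top (sup : (K -> Prop) -> K) : K := sup (fun _ => True).

Definition is_complete_lattice_on (A : K -> Prop) (leA : K -> K -> Prop)
    (vee : (K -> Prop) -> K) : Prop :=
  (forall x, A x -> leA x x) /\
  (forall x y, A x -> A y -> leA x y -> leA y x -> x = y) /\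
  (forall x y z, A x -> A y -> A z -> leA x y -> leA y z -> leA x z) /\
  (forall W : K -> Prop, (forall w, W w -> A w) ->
     A (vee W) /\
     (forall w, W w -> leA w (vee W)) /\
     (forall u, A u -> (forall w, W w -> leA w u) -> leA (vee W) u)) /\
  (forall W : K -> Prop, (forall w, W w -> A w) ->
     exists m, A m /\ (forall w, W w -> leA m w) /\
       (forall u, A u -> (forall w, W w -> leA u w) -> leA u m)).

Definition is_left_unital_module (sup : (K -> Prop) -> K) (mul : K -> K -> K) (e : K)
    (A : K -> Prop) (leA : K -> K -> Prop) (vee : (K -> Prop) -> K)
    (act : K -> K -> K) : Prop :=
  is_complete_lattice_on A leA vee /\
  (forall k a, A a -> A (act k a)) /\
  (forall v (S : K -> Prop), (forall s, S s -> A s) ->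
     act v (vee S) = vee (fun y => exists s, S s /\ y = act v s)) /\
  (forall (T : K -> Prop) a, A a ->
     act (sup T) a = vee (fun y => exists t, T t /\ y = act t a)) /\
  (forall u v a, A a -> act u (act v a) = act (mul u v) a) /\
  (forall a, A a -> act e a = a).

End Defs.

(* Main.v *)
Require Import Defs.
From Stdlib Require Import Setoid.

Lemma sup_is (K : Type) (le : K -> K -> Prop) (sup : (K -> Prop) -> K)
  (Hc : is_complete_join_semilattice K le sup) (S : K -> Prop) (a : K) :
  (forall y, S y -> le y a) -> S a -> sup S = a.
Proof.
  destruct Hc as [Hr [Ha [Ht [Hub Hlub]]]]. intros H1 H2.
  apply Ha; [apply Hlub; exact H1 | apply Hub; exact H2].
Qed.

Lemma sup_eq (K : Type) (le : K -> K -> Prop) (sup : (K -> Prop) -> K)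
  (Hc : is_complete_join_semilattice K le sup) (S T : K -> Prop) :
  (forall x, S x -> le x (sup T)) -> (forall x, T x -> le x (sup S)) -> sup S = sup T.
Proof.
  destruct Hc as [Hr [Ha [Ht [Hub Hlub]]]]. intros H1 H2.
  apply Ha; apply Hlub; assumption.
Qed.

Lemma fam_sig (K : Type) (le : K -> K -> Prop) (sup : (K -> Prop) -> K)
  (Hc : is_complete_join_semilattice K le sup) (S : K -> Prop) :
  fam_join K sup {x | S x} (@proj1_sig _ _) = sup S.
Proof.
  unfold fam_join. pose proof Hc as Hc'.
  destruct Hc as [Hr [Ha [Ht [Hub Hlub]]]].
  apply (sup_eq K le sup Hc').
  - intros x [[y Hy] ->]. apply Hub. exact Hy.
  - intros x Hx. apply Hub. exists (exist _ x Hx). reflexivity.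
Qed.

Lemma nnn (K : Type) (le : K -> K -> Prop) (sup : (K -> Prop) -> K)
  (Hc : is_complete_join_semilattice K le sup) (neg : K -> K)
  (Hn2 : forall (I : Type) (x : I -> K),
      neg (fam_join K sup I (fun i => neg (neg (x i)))) = neg (fam_join K sup I x)) :
  forall v, neg (neg (neg v)) = neg v.
Proof.
  intro v. pose proof (Hn2 unit (fun _ => v)) as H. unfold fam_join in H.
  rewrite !(sup_is K le sup Hc _ _ (fun y (Hy : exists _ : unit, y = _) =>
      match Hy with ex_intro _ _ e => eq_ind_r (fun z => le z _) (proj1 Hc _) e end)
      (ex_intro _ tt eq_refl)) in H.
  exact H.
Qed.

Lemma neg_sup_ext (K : Type) (le : K -> K -> Prop) (sup : (K -> Prop) -> K)
  (Hc : is_complete_join_semilattice K le sup) (neg : K -> K)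
  (Hn2 : forall (I : Type) (x : I -> K),
      neg (fam_join K sup I (fun i => neg (neg (x i)))) = neg (fam_join K sup I x))
  (S T : K -> Prop) :
  (forall s, S s -> exists t, T t /\ neg (neg s) = neg (neg t)) ->
  (forall t, T t -> exists s, S s /\ neg (neg s) = neg (neg t)) ->
  neg (sup S) = neg (sup T).
Proof.
  intros H1 H2.
  rewrite <- (fam_sig K le sup Hc S), <- (fam_sig K le sup Hc T).
  erewrite <- (Hn2 _ (@proj1_sig _ _)). erewrite <- (Hn2 _ (@proj1_sig _ _)). f_equal. unfold fam_join.
  pose proof Hc as Hc'. destruct Hc as [Hr [Ha [Ht [Hub Hlub]]]].
  apply (sup_eq K le sup Hc').
  - intros x [[s Hs] ->]. simpl. destruct (H1 s Hs) as [t [Tt E]].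
    apply Hub. exists (exist _ t Tt). simpl. exact E.
  - intros x [[t Tt] ->]. simpl. destruct (H2 t Tt) as [s [Ss E]].
    apply Hub. exists (exist _ s Ss). simpl. symmetry; exact E.
Qed.

Theorem theorem3p3 (K : Type) (le : K -> K -> Prop) (sup : (K -> Prop) -> K)
    (mul : K -> K -> K) (star : K -> K) (neg : K -> K) (e : K) :
  is_IGDA K le sup mul star neg e ->
  (forall v : K, neg (neg (neg v)) = neg v) /\
  is_left_unital_module K sup mul e (tests K neg) (tle K sup neg) (tjoin K sup neg)
    (tact K mul neg) /\
  tests K neg (neg (neg (bot K sup))) /\
  (forall v, tests K neg v -> tle K sup neg (neg (neg (bot K sup))) v) /\
  tests K neg (neg (neg (top K sup))) /\
  (forall v, tests K neg v -> tle K sup neg v (neg (neg (top K sup)))).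
Proof.
  intros [[Hc [Hassoc [Hdl [Hdr [Hel [Her [Hss [Hsm Hsj]]]]]]]] [Hn1 [Hn2 [Hns Hn4]]]].
  pose proof Hc as Hc'. destruct Hc' as [Hr [Ha [Ht [Hub Hlub]]]].
  assert (N3 := nnn K le sup Hc neg Hn2).
  assert (NE := neg_sup_ext K le sup Hc neg Hn2).
  assert (SI := sup_is K le sup Hc).
  assert (SE := sup_eq K le sup Hc).
  assert (TF : forall v, tests K neg v -> neg (neg v) = v).
  { intros v [k ->]. apply N3. }
  assert (NP : forall a b a' b', neg (neg a) = neg (neg a') -> neg (neg b) = neg (neg b') ->
            neg (sup (fun z => z = a \/ z = b)) = neg (sup (fun z => z = a' \/ z = b'))).
  { intros a b a' b' Ea Eb. apply NE.
    - intros s [->| ->]; [exists a'| exists b']; auto.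
    - intros t [->| ->]; [exists a| exists b]; auto. }
  assert (UB : forall W w, W w -> tle K sup neg w (tjoin K sup neg W)).
  { intros W w Ww. unfold tle, tjoin.
    rewrite (NP w (neg (neg (sup W))) w (sup W)); [| reflexivity | apply N3].
    rewrite (SI _ (sup W)); [reflexivity| |auto].
    intros y [->| ->]; [apply Hub; exact Ww| apply Hr]. }
  assert (LUB : forall W u, tests K neg u -> (forall w, W w -> tle K sup neg w u) ->
             tle K sup neg (tjoin K sup neg W) u).
  { intros W u Tu Hw. unfold tle, tjoin in Hw |- *.
    rewrite (NP (neg (neg (sup W))) u (sup W) u); [| apply N3 | reflexivity].
    set (Z := fun z => (exists w, W w /\ z = sup (fun y => y = w \/ y = u)) \/ z = u).
    assert (E : sup (fun z => z = sup W \/ z = u) = sup Z).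
    { apply SE.
      - intros x [->| ->].
        + apply Hlub. intros w Ww. apply Ht with (sup (fun y => y = w \/ y = u)).
          * apply Hub; auto.
          * apply Hub. left. exists w; auto.
        + apply Hub; right; auto.
      - intros x [[w [Ww ->]] | ->].
        + apply Hlub. intros y [->| ->].
          * apply Ht with (sup W); [apply Hub; auto| apply Hub; auto].
          * apply Hub; auto.
        + apply Hub; auto. }
    rewrite E. rewrite (NE Z (fun z => z = u)).
    - rewrite (SI _ u); [apply TF; auto | intros y ->; apply Hr | reflexivity].
    - intros s [[w [Ww ->]] | ->]; exists u; split; auto.
      rewrite (Hw w Ww). symmetry. apply TF; auto.
    - intros t ->. exists u. split; auto. unfold Z; auto. }
  assert (Tj : forall W, tests K neg (tjoin K sup neg W)).
  { intros W. exists (neg (sup W)). reflexivity. }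
  assert (PAIRC : forall x y, sup (fun z => z = x \/ z = y) = sup (fun z => z = y \/ z = x)).
  { intros x y. apply SE; intros z [->| ->]; apply Hub; auto. }
  assert (REFL : forall x, tests K neg x -> tle K sup neg x x).
  { intros x Tx. unfold tle, tjoin. rewrite (SI _ x); [apply TF; auto| |auto].
    intros y [->| ->]; apply Hr. }
  assert (ANTI : forall x y, tle K sup neg x y -> tle K sup neg y x -> x = y).
  { unfold tle, tjoin. intros x y H1 H2. rewrite <- H2 at 1. rewrite PAIRC. exact H1. }
  assert (TRANS : forall x y z, tests K neg z -> tle K sup neg x y -> tle K sup neg y z ->
                  tle K sup neg x z).
  { unfold tle, tjoin. intros x y z Tz H1 H2.
    transitivity (neg (neg (sup (fun w => w = x \/ w = neg (neg (sup (fun w => w = y \/ w = z))))))).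
    { rewrite H2. reflexivity. }
    rewrite (NP x (neg (neg (sup (fun w => w = y \/ w = z)))) x
                 (sup (fun w => w = y \/ w = z))); [|reflexivity|apply N3].
    assert (E : sup (fun w => w = x \/ w = sup (fun w => w = y \/ w = z)) =
                sup (fun w => w = sup (fun w => w = x \/ w = y) \/ w = z)).
    { apply SE.
      - intros w [->| ->].
        + apply Ht with (sup (fun w => w = x \/ w = y)); apply Hub; auto.
        + apply Hlub. intros w [->| ->].
          * apply Ht with (sup (fun w => w = x \/ w = y)); apply Hub; auto.
          * apply Hub; auto.
      - intros w [->| ->].
        + apply Hlub. intros w [->| ->].
          * apply Hub; auto.
          * apply Ht with (sup (fun w => w = y \/ w = z)); apply Hub; auto.
        + apply Ht with (sup (fun w => w = y \/ w = z)); apply Hub; auto. }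
    rewrite E.
    rewrite (NP (sup (fun w => w = x \/ w = y)) z y z); [exact H2| |reflexivity].
    rewrite H1. rewrite TF; [reflexivity|]. exists (neg (sup (fun w => w = x \/ w = y))).
    rewrite <- H1 at 1. reflexivity. }
  assert (MR : forall v S, mul v (sup S) = sup (fun y => exists s, S s /\ y = mul v s)).
  { intros v S. rewrite <- (fam_sig K le sup Hc S), Hdl. unfold fam_join.
    apply SE.
    - intros x [[s Hs] ->]. apply Hub. exists s. auto.
    - intros x [s [Hs ->]]. apply Hub. exists (exist _ s Hs). reflexivity. }
  assert (ML : forall T a, mul (sup T) a = sup (fun y => exists t, T t /\ y = mul t a)).
  { intros T a. rewrite <- (fam_sig K le sup Hc T), Hdr. unfold fam_join.
    apply SE.
    - intros x [[s Hs] ->]. apply Hub. exists s. auto.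
    - intros x [s [Hs ->]]. apply Hub. exists (exist _ s Hs). reflexivity. }
  assert (B0 : forall v, le (bot K sup) v).
  { intros v. apply Hlub. intros x []. }
  split; [exact N3|].
  split.
  { split.
    { split; [exact REFL|]. split; [intros; apply ANTI; auto|].
      split; [intros; eapply TRANS; eauto|].
      split.
      - intros W HW. split; [apply Tj|]. split; [intros; apply UB; auto|].
        intros; apply LUB; auto.
      - intros W HW. exists (tjoin K sup neg (fun u => tests K neg u /\ forall w, W w -> tle K sup neg u w)).
        split; [apply Tj|]. split.
        + intros w Ww. apply LUB; [apply HW; auto|]. intros u [_ Hu]. apply Hu; auto.
        + intros u Tu Hu. apply UB. split; auto. }
    split; [intros k a _; exists (neg (mul k a)); reflexivity|].
    split.
    { intros v S HS. unfold tact, tjoin. rewrite Hn1, MR. f_equal.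
      apply NE.
      - intros s [x [Sx ->]]. exists (neg (neg (mul v x))). split; [exists x; auto|].
        rewrite N3; reflexivity.
      - intros t [x [Sx ->]]. exists (mul v x). split; [exists x; auto|].
        rewrite N3; reflexivity. }
    split.
    { intros T a Ta. unfold tact, tjoin. rewrite ML. f_equal.
      apply NE.
      - intros s [x [Sx ->]]. exists (neg (neg (mul x a))). split; [exists x; auto|].
        rewrite N3; reflexivity.
      - intros t [x [Sx ->]]. exists (mul x a). split; [exists x; auto|].
        rewrite N3; reflexivity. }
    split.
    { intros u v a Ta. unfold tact. rewrite Hn1, Hassoc. reflexivity. }
    { intros a Ta. unfold tact. rewrite Hel. apply TF; auto. } }
  split; [exists (neg (bot K sup)); reflexivity|].
  split.
  { intros v Tv. unfold tle, tjoin.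
    rewrite (NP (neg (neg (bot K sup))) v (bot K sup) v); [|apply N3|reflexivity].
    rewrite (SI _ v); [apply TF; auto| |auto].
    intros y [->| ->]; [apply B0|apply Hr]. }
  split; [exists (neg (top K sup)); reflexivity|].
  { intros v Tv. unfold tle, tjoin.
    rewrite (NP v (neg (neg (top K sup))) v (top K sup)); [|reflexivity|apply N3].
    rewrite (SI _ (top K sup)); [reflexivity| |auto].
    intros y [->| ->]; [apply Hub; exact I|apply Hr]. }
Qed.
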